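(* For every coloring $c:S^1\to\{R,B\}$ there exists a distinguishing coloring $c^*:S^1\to\{R,B\}$ such that $c(x)\neq c^*(x)$ for at most three points $x\in S^1$.
   Context: The group $O(2)$ of isometries of the unit circle $S^1$ (rotations and reflections) acts on $S^1$. A coloring $c:S^1\to\{R,B\}$ is distinguishing if no non-identity $\gamma\in O(2)$ satisfies $c\circ\gamma=c$. *)

(* Defs.v *)
From Stdlib Require Export Reals List.
Open Scope R_scope.

Definition onS1 (p : R * R) : Prop := fst p ^ 2 + snd p ^ 2 = 1.

(* Elements of O(2): orthogonal 2x2 matrices
     rotation   (refl = false):  [[a, -b], [b,  a]]
     reflection (refl = true ):  [[a,  b], [b, -a]]
   with a^2 + b^2 = 1.  Every element of O(2) is of exactly one of these forms. *)
Record O2 : Type := mkO2 {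
  o2_a : R;
  o2_b : R;
  o2_refl : bool;
  o2_unit : o2_a ^ 2 + o2_b ^ 2 = 1
}.

Definition o2_act (g : O2) (p : R * R) : R * R :=
  let (x, y) := p in
  if o2_refl g
  then (o2_a g * x + o2_b g * y, o2_b g * x - o2_a g * y)
  else (o2_a g * x - o2_b g * y, o2_b g * x + o2_a g * y).

Inductive color : Type := Red | Blue.

(* A coloring of S^1 is given as a function on R^2; only its values on S^1 matter. *)
Definition coloring := (R * R) -> color.

Definition o2_is_id (g : O2) : Prop := forall p, onS1 p -> o2_act g p = p.

Definition distinguishing (c : coloring) : Prop :=
  forall g : O2, ~ o2_is_id g -> ~ (forall p, onS1 p -> c (o2_act g p) = c p).

(* Main.v *)
Require Import Defs.
From Stdlib Require Import Reals List Lra Psatz Classical Arith.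
From Coquelicot Require Import Complex.
Open Scope R_scope.

Lemma unit_nz (p : C) : onS1 p -> p <> RtoC 0.
Proof. unfold onS1. intros H E. subst. simpl in H. lra. Qed.

Lemma onS1_eq (p : C) : onS1 p -> (fst p * fst p + snd p * snd p = 1).
Proof. unfold onS1. simpl. lra. Qed.

Lemma Cconj_unit (p : C) : onS1 p -> Cconj p = (/ p)%C.
Proof.
  destruct p as [x y]. intros H. apply onS1_eq in H. simpl in H.
  unfold Cinv, Cconj. simpl. f_equal; replace (x*(x*1)+y*(y*1)) with 1 by lra; field.
Qed.

Lemma onS1_mult (p q : C) : onS1 p -> onS1 q -> onS1 (p*q)%C.
Proof.
  destruct p as [a b], q as [x y]. unfold onS1; simpl. intros H1 H2.
  replace ((a * x - b * y) * ((a * x - b * y) * 1) + (a * y + b * x) * ((a * y + b * x) * 1))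
    with ((a*(a*1)+b*(b*1))*(x*(x*1)+y*(y*1))) by ring. rewrite H1, H2. ring.
Qed.

Lemma onS1_conj (p : C) : onS1 p -> onS1 (Cconj p).
Proof. destruct p as [a b]. unfold onS1; simpl. intros H. lra. Qed.

Lemma onS1_inv (p : C) : onS1 p -> onS1 (/ p)%C.
Proof. intros H. rewrite <- Cconj_unit by auto. apply onS1_conj; auto. Qed.

Lemma onS1_div (p q : C) : onS1 p -> onS1 q -> onS1 (p / q)%C.
Proof. intros. unfold Cdiv. apply onS1_mult; auto. apply onS1_inv; auto. Qed.

Lemma onS1_1 : onS1 (RtoC 1).
Proof. unfold onS1; simpl; lra. Qed.

Lemma onS1_opp (p : C) : onS1 p -> onS1 (- p)%C.
Proof. destruct p as [a b]. unfold onS1; simpl. intros H. lra. Qed.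

Definition rotf (s : C) (p : C) : C := (s * p)%C.
Definition reff (a : C) (p : C) : C := (a * Cconj p)%C.

Lemma reff_div (a p : C) : onS1 p -> reff a p = (a / p)%C.
Proof. intros H. unfold reff. rewrite Cconj_unit by auto. reflexivity. Qed.

Lemma onS1_reff (a p : C) : onS1 a -> onS1 p -> onS1 (reff a p).
Proof. intros. unfold reff. apply onS1_mult; auto. apply onS1_conj; auto. Qed.

Lemma onS1_rotf (a p : C) : onS1 a -> onS1 p -> onS1 (rotf a p).
Proof. intros. unfold rotf. apply onS1_mult; auto. Qed.

Lemma o2_act_eq (g : O2) (p : C) :
  o2_act g p = if o2_refl g then reff (o2_a g, o2_b g) p else rotf (o2_a g, o2_b g) p.
Proof.
  destruct g as [a b r u], p as [x y]. unfold o2_act. simpl.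
  destruct r; unfold reff, rotf, Cmult, Cconj; simpl; f_equal; ring.
Qed.

Lemma Cmult_integral (a b : C) : (a * b)%C = RtoC 0 -> a = RtoC 0 \/ b = RtoC 0.
Proof.
  intros H. destruct (classic (a = RtoC 0)) as [Ha|Ha]; [left; auto|right].
  replace b with (/a * (a * b))%C by (field; auto). rewrite H. ring.
Qed.

Lemma Csq1 (z : C) : (z * z)%C = RtoC 1 -> z = RtoC 1 \/ z = (- RtoC 1)%C.
Proof.
  intros H. assert (((z - RtoC 1) * (z + RtoC 1))%C = RtoC 0).
  { replace ((z - RtoC 1) * (z + RtoC 1))%C with (z*z - RtoC 1)%C by ring. rewrite H. ring. }
  apply Cmult_integral in H0. destruct H0 as [H0|H0]; [left|right].
  - replace z with ((z - RtoC 1) + RtoC 1)%C by ring. rewrite H0. ring.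
  - replace z with ((z + RtoC 1) - RtoC 1)%C by ring. rewrite H0. ring.
Qed.

Definition pdec (p q : C) : {p = q} + {p <> q}.
Proof.
  destruct p as [a b], q as [x y].
  destruct (Req_EM_T a x) as [E1|E1]; [destruct (Req_EM_T b y) as [E2|E2]|].
  - left; subst; auto.
  - right; intros H; inversion H; auto.
  - right; intros H; inversion H; auto.
Defined.

Definition swapc (k : color) : color := match k with Red => Blue | Blue => Red end.
Lemma swapc_neq k : swapc k <> k. Proof. destruct k; discriminate. Qed.
Lemma swapc_inv k : swapc (swapc k) = k. Proof. destruct k; auto. Qed.
Lemma color_neq k l : k <> l -> l = swapc k.
Proof. destruct k, l; simpl; intros; auto; congruence. Qed.

Definition flip (c : coloring) (e : C) : coloring :=
  fun p => if pdec p e then swapc (c p) else c p.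
Definition inv (c : coloring) (g : C -> C) : Prop := forall p, onS1 p -> c (g p) = c p.

Lemma D1 c e g p : inv (flip c e) g -> onS1 p -> p <> e -> g p <> e -> c (g p) = c p.
Proof.
  intros H Hp N1 N2. specialize (H p Hp). unfold flip in H.
  destruct (pdec (g p) e); [contradiction|]. destruct (pdec p e); [contradiction|]. auto.
Qed.

Lemma D2 c e g : inv (flip c e) g -> onS1 e -> g e <> e -> c (g e) <> c e.
Proof.
  intros H He N. specialize (H e He). unfold flip in H.
  destruct (pdec (g e) e); [contradiction|]. destruct (pdec e e); [|contradiction].
  rewrite H. apply swapc_neq.
Qed.

Definition candt (n : nat) : R := INR n + 1.
Definition cand (n : nat) : C :=
  ((1 - candt n * candt n) / (1 + candt n * candt n), 2 * candt n / (1 + candt n * candt n)).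

Lemma candt_pos n : 0 < candt n.
Proof. unfold candt. pose proof (pos_INR n). lra. Qed.

Lemma cand_S1 n : onS1 (cand n).
Proof.
  unfold onS1, cand. simpl. pose proof (candt_pos n). set (t := candt n) in *.
  field. nra.
Qed.

Lemma cand_inj n m : (cand n * cand n)%C = (cand m * cand m)%C -> n = m.
Proof.
  intros H.
  assert (E : cand n = cand m \/ cand n = (- cand m)%C).
  { assert (((cand n - cand m) * (cand n + cand m))%C = RtoC 0).
    { replace ((cand n - cand m) * (cand n + cand m))%C with
        (cand n * cand n - cand m * cand m)%C by ring. rewrite H. ring. }
    apply Cmult_integral in H0. destruct H0 as [H0|H0]; [left|right].
    - replace (cand n) with ((cand n - cand m) + cand m)%C by ring. rewrite H0. ring.
    - replace (cand n) with ((cand n + cand m) - cand m)%C by ring. rewrite H0. ring. }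
  pose proof (candt_pos n) as Pn. pose proof (candt_pos m) as Pm.
  destruct E as [E|E]; unfold cand in E; injection E as E1 E2.
  - assert (candt n = candt m).
    { set (t := candt n) in *. set (s := candt m) in *.
      assert (1 + t*t > 0) by nra. assert (1 + s*s > 0) by nra.
      apply (f_equal (fun z => z * (1 + t*t) * (1 + s*s))) in E1.
      field_simplify in E1; try lra. nra. }
    unfold candt in H0. apply INR_eq. lra.
  - exfalso. set (t := candt n) in *. set (s := candt m) in *.
    assert (1 + t*t > 0) by nra. assert (1 + s*s > 0) by nra.
    assert (2*t/(1+t*t) > 0). { apply Rdiv_lt_0_compat; lra. }
    assert (2*s/(1+s*s) > 0). { apply Rdiv_lt_0_compat; lra. }
    lra.
Qed.

Lemma cand_inj1 n m : cand n = cand m -> n = m.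
Proof. intros H. apply cand_inj. rewrite H. auto. Qed.

Definition gen (L M : list C) (y : C) : Prop :=
  onS1 y /\ (forall z, In z L -> y <> z) /\ (forall z, In z M -> (y * y)%C <> z).

Lemma killers (L M : list C) : exists K : list nat, forall n,
  ((exists z, In z L /\ cand n = z) \/ (exists z, In z M /\ (cand n * cand n)%C = z)) -> In n K.
Proof.
  induction L as [|a L IH].
  - induction M as [|b M IH].
    + exists nil. intros n [[z [[] _]]|[z [[] _]]].
    + destruct IH as [K HK].
      destruct (classic (exists n, (cand n * cand n)%C = b)) as [[n0 Hn0]|N].
      * exists (n0 :: K). intros n [[z [[] _]]|[z [[E|I] Hz]]].
        -- subst. left. apply cand_inj. congruence.
        -- right. apply HK. right. eauto.
      * exists K. intros n [[z [[] _]]|[z [[E|I] Hz]]].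
        -- subst. exfalso. apply N. eauto.
        -- apply HK. right. eauto.
  - destruct IH as [K HK].
    destruct (classic (exists n, cand n = a)) as [[n0 Hn0]|N].
    + exists (n0 :: K). intros n [[z [[E|I] Hz]]|H].
      * subst. left. apply cand_inj1. congruence.
      * right. apply HK. left. eauto.
      * right. apply HK. right. auto.
    + exists K. intros n [[z [[E|I] Hz]]|H].
      * subst. exfalso. apply N. eauto.
      * apply HK. left. eauto.
      * apply HK. right. auto.
Qed.

Lemma in_le_sum (K : list nat) n : In n K -> (n <= list_sum K)%nat.
Proof.
  induction K as [|a K IH]; simpl; [tauto|]. intros [E|I]; [subst; lia|]. specialize (IH I). lia.
Qed.

Lemma gen_exists (L M : list C) : exists y, gen L M y.
Proof.
  destruct (killers L M) as [K HK].
  exists (cand (S (list_sum K))). split; [apply cand_S1|]. split.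
  - intros z Hz E. assert (In (S (list_sum K)) K) by (apply HK; left; eauto).
    apply in_le_sum in H. lia.
  - intros z Hz E. assert (In (S (list_sum K)) K) by (apply HK; right; eauto).
    apply in_le_sum in H. lia.
Qed.

Lemma gen_app_l L1 L2 M y : gen (L1 ++ L2) M y -> gen L1 M y.
Proof. intros [H1 [H2 H3]]. split; auto. split; auto. intros z Hz. apply H2. apply in_or_app; auto. Qed.

Definition Bad (c : coloring) (e : C) : Prop :=
  (exists s, onS1 s /\ s <> RtoC 1 /\ inv (flip c e) (rotf s)) \/
  (exists a, onS1 a /\ inv (flip c e) (reff a)).

Lemma reff_invol a p : onS1 a -> onS1 p -> reff a (reff a p) = p.
Proof.
  intros Ha Hp. rewrite (reff_div a p Hp). rewrite reff_div.
  2:{ rewrite <- reff_div by auto. apply onS1_reff; auto. }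
  pose proof (unit_nz a Ha). pose proof (unit_nz p Hp). field. split; auto.
Qed.

Lemma rot_fix s y : onS1 y -> rotf s y = y -> s = RtoC 1.
Proof.
  intros Hy H. unfold rotf in H. pose proof (unit_nz y Hy).
  replace s with ((s * y) / y)%C by (field; auto). rewrite H. field; auto.
Qed.

Lemma ref_fix a y : onS1 y -> reff a y = y -> a = (y * y)%C.
Proof.
  intros Hy H. rewrite reff_div in H by auto. pose proof (unit_nz y Hy).
  replace a with ((a / y) * y)%C by (field; auto). rewrite H. auto.
Qed.

Lemma Ta c y a : onS1 a -> onS1 y -> inv (flip c y) (reff a) -> reff a y = y -> inv c (reff a).
Proof.
  intros Ha Hy H F p Hp. destruct (pdec p y) as [E|N].
  - subst. rewrite F. auto.
  - apply (D1 c y); auto. intros E. apply N. rewrite <- (reff_invol a p) by auto.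
    rewrite E. auto.
Qed.

Lemma csqrt (z : C) : onS1 z -> exists y, onS1 y /\ (y * y)%C = z.
Proof.
  destruct z as [a b]. intros H. pose proof (onS1_eq _ H) as H'. simpl in H'.
  destruct (Req_EM_T a (-1)) as [E|E].
  - exists (0, 1). split. unfold onS1; simpl; lra.
    subst. assert (b = 0) by nra. subst. unfold Cmult; simpl. f_equal; ring.
  - assert (a >= -1) by nra. assert (P : 0 < 2 + 2*a) by lra.
    set (k := sqrt (2 + 2*a)).
    assert (Hk : k * k = 2 + 2*a) by (apply sqrt_sqrt; lra).
    assert (Kp : 0 < k) by (apply sqrt_lt_R0; lra).
    exists ((1 + a)/k, b/k). split.
    + unfold onS1; cbn [fst snd].
      replace (((1 + a) / k) ^ 2 + (b / k) ^ 2) with (((1+a)^2 + b^2)/(k*k)) by (field; lra).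
      rewrite Hk. replace ((1+a)^2+b^2) with (2+2*a) by nra. field; lra.
    + unfold Cmult; simpl. f_equal.
      * replace ((1 + a) / k * ((1 + a) / k) - b / k * (b / k)) with (((1+a)^2 - b^2)/(k*k)) by (field; lra).
        rewrite Hk. replace ((1+a)^2-b^2) with (a*(2+2*a)) by nra. field; lra.
      * replace ((1 + a) / k * (b / k) + b / k * ((1 + a) / k)) with ((2*(1+a)*b)/(k*k)) by (field; lra).
        rewrite Hk. field; lra.
Qed.

Lemma caseA c r : onS1 r -> r <> RtoC 1 -> inv c (rotf r) ->
  (forall e, onS1 e -> Bad c e) -> forall p q : C, onS1 p -> onS1 q -> c p = c q.
Proof.
  intros Hr Nr Ir Hbad.
  assert (Hyy : forall y, onS1 y -> inv c (reff (y * y)%C)).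
  { intros y Hy. destruct (Hbad y Hy) as [[s [Hs [Ns Is]]]|[a [Ha Ia]]].
    - exfalso.
      assert (Nsy : rotf s y <> y) by (intros E; apply Ns; exact (rot_fix s y Hy E)).
      pose proof (D2 c y (rotf s) Is Hy Nsy) as K.
      assert (Hsy : onS1 (rotf s y)) by (apply onS1_rotf; auto).
      assert (K1 : c (rotf r (rotf s y)) = c (rotf s y)) by (apply Ir; auto).
      destruct (pdec (rotf s (rotf r y)) y) as [E|E].
      + apply K. rewrite <- K1. f_equal.
        assert (Q : rotf r (rotf s y) = rotf s (rotf r y)) by (unfold rotf; ring). rewrite Q, E. auto.
      + assert (Nry : rotf r y <> y) by (intros E'; apply Nr; exact (rot_fix r y Hy E')).
        assert (K2 := D1 c y (rotf s) (rotf r y) Is (onS1_rotf r y Hr Hy) Nry E).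
        assert (K3 : c (rotf r y) = c y) by (apply Ir; auto).
        apply K. rewrite <- K1. replace (rotf r (rotf s y)) with (rotf s (rotf r y))
          by (unfold rotf; ring). congruence.
    - destruct (pdec (reff a y) y) as [F|F].
      + pose proof (ref_fix a y Hy F) as Ea. rewrite <- Ea. exact (Ta c y a Ha Hy Ia F).
      + exfalso. pose proof (D2 c y (reff a) Ia Hy F) as K.
        assert (K3 : c (rotf r y) = c y) by (apply Ir; auto).
        destruct (pdec (rotf r y) (reff a y)) as [E|E].
        * apply K. rewrite <- E. auto.
        * assert (Nry : rotf r y <> y) by (intros E'; apply Nr; exact (rot_fix r y Hy E')).
          assert (Nu : reff a (rotf r y) <> y).
          { intros E'. apply E. rewrite <- (reff_invol a (rotf r y)) by (auto; apply onS1_rotf; auto).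
            rewrite E'. auto. }
          assert (K2 := D1 c y (reff a) (rotf r y) Ia (onS1_rotf r y Hr Hy) Nry Nu).
          pose proof (unit_nz r Hr). pose proof (unit_nz y Hy).
          assert (Hz : onS1 (rotf (/ r)%C (reff a y))).
          { apply onS1_rotf. apply onS1_inv; auto. apply onS1_reff; auto. }
          pose proof (Ir _ Hz) as K4.
          replace (rotf r (rotf (/ r) (reff a y)))%C with (reff a y) in K4
            by (unfold rotf; field; auto).
          replace (rotf (/ r) (reff a y)) with (reff a (rotf r y)) in K4.
          2:{ rewrite !reff_div; auto. unfold rotf. field. auto. apply onS1_rotf; auto. }
          apply K. congruence. }
  intros p q Hp Hq. destruct (csqrt (q * p)%C (onS1_mult q p Hq Hp)) as [y [Hy Ey]].
  specialize (Hyy y Hy p Hp). rewrite Ey in Hyy. rewrite reff_div in Hyy by auto.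
  replace (q * p / p)%C with q in Hyy by (field; apply unit_nz; auto). auto.
Qed.

Lemma inv_ext (c : coloring) (g h : C -> C) :
  (forall p, onS1 p -> g p = h p) -> inv c g -> inv c h.
Proof. intros E I p Hp. rewrite <- E by auto. auto. Qed.

Lemma inv_comp (c : coloring) (g h : C -> C) :
  inv c g -> inv c h -> (forall p, onS1 p -> onS1 (h p)) -> inv c (fun p => g (h p)).
Proof. intros Ig Ih Hh p Hp. rewrite Ig by auto. auto. Qed.

Lemma reff_reff (A B p : C) : onS1 B -> onS1 p -> reff A (reff B p) = rotf (A / B)%C p.
Proof.
  intros HB Hp. pose proof (unit_nz _ HB). pose proof (unit_nz _ Hp).
  rewrite (reff_div A (reff B p)) by (apply onS1_reff; auto).
  rewrite (reff_div B p Hp). unfold rotf. field. auto.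
Qed.

Lemma typeA_excl (c : coloring) (y a0 : C) :
  ~ (exists r, onS1 r /\ r <> RtoC 1 /\ inv c (rotf r)) ->
  onS1 y -> onS1 a0 -> inv c (reff (y*y)%C) -> inv c (reff (a0*a0)%C) -> (y * y)%C = (a0 * a0)%C.
Proof.
  intros NR Hy Ha I1 I2.
  assert (Hyy : onS1 (y*y)%C) by (apply onS1_mult; auto).
  assert (Haa : onS1 (a0*a0)%C) by (apply onS1_mult; auto).
  pose proof (unit_nz _ Haa). pose proof (unit_nz _ Ha).
  assert (I3 : inv c (rotf ((y*y)/(a0*a0))%C)).
  { eapply inv_ext; [|apply (inv_comp c _ _ I1 I2)].
    - intros p Hp. cbv beta. apply reff_reff; auto.
    - intros p Hp. apply onS1_reff; auto. }
  destruct (pdec ((y*y)/(a0*a0))%C (RtoC 1)) as [E|E].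
  - replace (y*y)%C with ((y*y)/(a0*a0) * (a0*a0))%C by (field; auto). rewrite E. ring.
  - exfalso. apply NR. exists ((y*y)/(a0*a0))%C. split; auto. apply onS1_div; auto.
Qed.

Lemma Rlem (c : coloring) (x y s t : C) :
  onS1 x -> onS1 y -> onS1 s -> onS1 t -> s <> RtoC 1 -> t <> RtoC 1 ->
  inv (flip c x) (rotf s) -> inv (flip c y) (rotf t) ->
  y <> x -> y <> (s * x)%C -> y <> (x / s)%C -> y <> (- x)%C ->
  (y * y)%C = (s * x * x)%C \/ (y * y)%C = (x * x / s)%C.
Proof.
  intros Hx Hy Hs Ht Ns Nt Ix Iy N1 N2 N3 N4.
  pose proof (unit_nz _ Hx) as Zx. pose proof (unit_nz _ Hy) as Zy.
  pose proof (unit_nz _ Hs) as Zs. pose proof (unit_nz _ Ht) as Zt.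
  assert (Nty : rotf t y <> y) by (intros E; apply Nt; exact (rot_fix t y Hy E)).
  assert (Nsx : rotf s x <> x) by (intros E; apply Ns; exact (rot_fix s x Hx E)).
  pose proof (D2 c y (rotf t) Iy Hy Nty) as Ay.
  pose proof (D2 c x (rotf s) Ix Hx Nsx) as Ax.
  assert (Comm : forall p, rotf s (rotf t p) = rotf t (rotf s p)) by (intros; unfold rotf; ring).
  assert (Cl1 : (t * y)%C = x \/ (t * y)%C = (x / s)%C).
  { apply NNPP. intros H. apply not_or_and in H. destruct H as [H1 H2].
    assert (A1 : c (rotf s y) = c y).
    { apply (D1 c x); auto. intros E; apply N3. unfold rotf in E. rewrite <- E. field; auto. }
    assert (A2 : c (rotf s (rotf t y)) = c (rotf t y)).
    { apply (D1 c x); auto. apply onS1_rotf; auto. intros E; apply H2. unfold rotf in E.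
      unfold rotf. rewrite <- E. field; auto. }
    destruct (pdec (rotf t (rotf s y)) y) as [E|E].
    - assert (Est : (s * t)%C = RtoC 1).
      { unfold rotf in E. replace (s*t)%C with ((t * (s * y))/y)%C by (field; auto).
        rewrite E. field; auto. }
      destruct (pdec (x / t)%C y) as [E2|E2].
      + apply H1. rewrite <- E2. field; auto.
      + apply Ax. assert (B : c (rotf t (x / t)%C) = c (x / t)%C).
        { apply (D1 c y); auto. apply onS1_div; auto. unfold rotf.
          replace (t * (x / t))%C with x by (field; auto). auto. }
        unfold rotf in B. replace (t * (x / t))%C with x in B by (field; auto).
        rewrite B. unfold rotf. f_equal. replace s with (/ t)%C.
        field; auto. replace s with (s * t / t)%C by (field; auto). rewrite Est. field; auto.
    - assert (Nsy : rotf s y <> y) by (intros E'; apply Ns; exact (rot_fix s y Hy E')).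
      assert (A3 : c (rotf t (rotf s y)) = c (rotf s y)) by (apply (D1 c y); auto; apply onS1_rotf; auto).
      apply Ay. rewrite <- A2. rewrite Comm. congruence. }
  assert (Cl2 : (s * x)%C = y \/ (s * x)%C = (y / t)%C \/ x = (y / t)%C).
  { apply NNPP. intros H. apply not_or_and in H. destruct H as [H1 H].
    apply not_or_and in H. destruct H as [H2 H3].
    assert (B1 : c (rotf t x) = c x).
    { apply (D1 c y); auto. intros E; apply H3. unfold rotf in E. rewrite <- E. field; auto. }
    assert (B2 : c (rotf t (rotf s x)) = c (rotf s x)).
    { apply (D1 c y); auto. apply onS1_rotf; auto. intros E; apply H2. unfold rotf in E.
      unfold rotf. rewrite <- E. field; auto. }
    destruct (pdec (rotf s (rotf t x)) x) as [E|E].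
    - assert (Est : (s * t)%C = RtoC 1).
      { unfold rotf in E. replace (s*t)%C with ((s * (t * x))/x)%C by (field; auto).
        rewrite E. field; auto. }
      apply Ay. assert (B : c (rotf s (y / s)%C) = c (y / s)%C).
      { apply (D1 c x); auto. apply onS1_div; auto.
        intros E2; apply N2. rewrite <- E2. field; auto. unfold rotf.
        replace (s * (y / s))%C with y by (field; auto). auto. }
      unfold rotf in B. replace (s * (y / s))%C with y in B by (field; auto).
      rewrite B. unfold rotf. f_equal. replace t with (/ s)%C.
      field; auto. replace t with (s * t / s)%C by (field; auto). rewrite Est. field; auto.
    - assert (Ntx : rotf t x <> x) by (intros E'; apply Nt; exact (rot_fix t x Hx E')).
      assert (A3 : c (rotf s (rotf t x)) = c (rotf t x)) by (apply (D1 c x); auto; apply onS1_rotf; auto).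
      apply Ax. rewrite <- B2. rewrite <- Comm. congruence. }
  destruct Cl1 as [E1|E1]; destruct Cl2 as [E2|[E2|E2]].
  - exfalso. apply N2. auto.
  - left. replace (s * x * x)%C with ((s * x) * x)%C by ring. rewrite E2, <- E1. field; auto.
  - exfalso. apply N4. assert (Tt : (t * t)%C = RtoC 1).
    { replace (t*t)%C with ((t * y) * t / y)%C by (field; auto). rewrite E1, E2. field; auto. }
    apply Csq1 in Tt. destruct Tt as [T1|T1]; [contradiction|].
    rewrite <- E1, T1. ring.
  - exfalso. apply N2. auto.
  - exfalso. assert (Y : y = (s*x*t)%C).
    { replace y with ((y/t)*t)%C by (field; auto). rewrite <- E2. ring. }
    assert (Q : ((s * t) * (s * t))%C = RtoC 1).
    { replace ((s*t)*(s*t))%C with (s * (t*y) / x)%C by (rewrite Y; field; auto).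
      rewrite E1. field; auto. }
    apply Csq1 in Q. destruct Q as [Q|Q].
    + apply N1. replace y with ((s * x) * t)%C by (rewrite E2; field; auto).
      replace ((s * x) * t)%C with ((s * t) * x)%C by ring. rewrite Q. ring.
    + apply N4. replace y with ((s * x) * t)%C by (rewrite E2; field; auto).
      replace ((s * x) * t)%C with ((s * t) * x)%C by ring. rewrite Q. ring.
  - right. replace (x * x / s)%C with (x * (x / s))%C by (field; auto). rewrite <- E1.
    rewrite E2. field; auto.
Qed.

Definition Pb (c : coloring) (y a : C) : Prop :=
  onS1 a /\ inv (flip c y) (reff a) /\ reff a y <> y.

Lemma Bgen (c : coloring) :
  (forall e, onS1 e -> Bad c e) -> ~ (exists r, onS1 r /\ r <> RtoC 1 /\ inv c (rotf r)) ->
  exists L0 M0, forall y, gen L0 M0 y -> exists a, Pb c y a.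
Proof.
  intros Hbad NR.
  assert (HA : exists MA : list C, forall y, onS1 y -> (forall z, In z MA -> (y*y)%C <> z) ->
                 ~ inv c (reff (y*y)%C)).
  { destruct (classic (exists a0, onS1 a0 /\ inv c (reff (a0*a0)%C))) as [[a0 [Ha0 Ia0]]|N].
    - exists ((a0*a0)%C :: nil). intros y Hy Hm I. apply (Hm (a0*a0)%C); [left; auto|].
      apply typeA_excl with c; auto.
    - exists nil. intros y Hy _ I. apply N. eauto. }
  assert (HR : exists LR MR : list C, forall y, onS1 y -> (forall z, In z LR -> y <> z) ->
                 (forall z, In z MR -> (y*y)%C <> z) ->
                 ~ exists s, onS1 s /\ s <> RtoC 1 /\ inv (flip c y) (rotf s)).
  { destruct (classic (exists x0 s0, onS1 x0 /\ onS1 s0 /\ s0 <> RtoC 1 /\ inv (flip c x0) (rotf s0)))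
      as [[x0 [s0 [Hx0 [Hs0 [Ns0 Is0]]]]]|N].
    - exists (x0 :: (s0 * x0)%C :: (x0 / s0)%C :: (- x0)%C :: nil).
      exists ((s0 * x0 * x0)%C :: (x0 * x0 / s0)%C :: nil).
      intros y Hy Hl Hm [s [Hs [Ns Is]]].
      assert (N1 : y <> x0) by (apply Hl; simpl; auto).
      assert (N2 : y <> (s0 * x0)%C) by (apply Hl; simpl; auto).
      assert (N3 : y <> (x0 / s0)%C) by (apply Hl; simpl; auto).
      assert (N4 : y <> (- x0)%C) by (apply Hl; simpl; auto).
      destruct (Rlem c x0 y s0 s Hx0 Hy Hs0 Hs Ns0 Ns Is0 Is N1 N2 N3 N4) as [E|E].
      + apply (Hm _ (or_introl eq_refl)); auto.
      + apply (Hm _ (or_intror (or_introl eq_refl))); auto.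
    - exists nil, nil. intros y Hy _ _ [s [Hs [Ns Is]]]. apply N. exists y, s. auto. }
  destruct HA as [MA HA]. destruct HR as [LR [MR HR]].
  exists LR, (MA ++ MR). intros y [Hy [Hl Hm]].
  destruct (Hbad y Hy) as [Hrot|[a [Ha Ia]]].
  - exfalso. apply (HR y Hy Hl); auto. intros z Hz. apply Hm. apply in_or_app; auto.
  - exists a. split; auto. split; auto. intros F.
    apply (HA y Hy). intros z Hz. apply Hm. apply in_or_app; auto.
    pose proof (ref_fix a y Hy F) as Ea. rewrite <- Ea. exact (Ta c y a Ha Hy Ia F).
Qed.

Lemma almost_ref (c : coloring) (e a p : C) : onS1 a -> onS1 e -> inv (flip c e) (reff a) ->
  onS1 p -> p <> e -> p <> reff a e -> c (reff a p) = c p.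
Proof.
  intros Ha He I Hp N1 N2. apply (D1 c e); auto. intros Heq. apply N2.
  rewrite <- Heq. rewrite reff_invol; auto.
Qed.

Lemma same_inv (c : coloring) (a x1 x2 : C) : onS1 a -> onS1 x1 -> onS1 x2 ->
  inv (flip c x1) (reff a) -> inv (flip c x2) (reff a) -> reff a x1 <> x1 ->
  x2 <> x1 -> x2 <> reff a x1 -> False.
Proof.
  intros Ha H1 H2 I1 I2 F N1 N2. pose proof (D2 c x1 (reff a) I1 H1 F) as K.
  apply K. apply (almost_ref c x2 a); auto.
  intros Heq2. apply N2. rewrite Heq2. rewrite reff_invol; auto.
Qed.

Lemma unwind2 (a b y z : C) : onS1 a -> onS1 b -> onS1 y -> reff b (reff a y) = z -> y = reff a (reff b z).
Proof. intros Ha Hb Hy Heq. rewrite <- Heq. rewrite reff_invol; auto. rewrite reff_invol; auto. apply onS1_reff; auto. Qed.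

Lemma unwind3 (a b y z : C) : onS1 a -> onS1 b -> onS1 y ->
  reff a (reff b (reff a y)) = z -> y = reff a (reff b (reff a z)).
Proof.
  intros Ha Hb Hy Heq. rewrite <- Heq. rewrite (reff_invol a (reff b (reff a y))).
  rewrite reff_invol. rewrite reff_invol; auto. auto. apply onS1_reff; auto. auto.
  apply onS1_reff; auto. apply onS1_reff; auto.
Qed.

Lemma two_ref_fix (a b y : C) : onS1 a -> onS1 b -> onS1 y -> reff b (reff a y) = y -> a = b.
Proof.
  intros Ha Hb Hy Heq. rewrite reff_reff in Heq; auto. unfold rotf in Heq.
  pose proof (unit_nz _ Ha). pose proof (unit_nz _ Hy).
  replace b with ((b / a * y) / y * a)%C by (field; auto). rewrite Heq. field; auto.
Qed.

Lemma Rone (c : coloring) (a b w e x y : C) :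
  onS1 a -> onS1 b -> onS1 w -> onS1 e -> onS1 x -> onS1 y ->
  inv (flip c e) (reff a) -> inv (flip c x) (reff b) -> inv (flip c y) (reff w) ->
  reff w y <> y -> y <> e -> y <> reff a e -> y <> reff a x -> y <> reff a (reff b x) -> a <> b ->
  reff w y = x \/ reff w y = reff b x \/ reff w y = reff b e \/ reff w y = reff b (reff a e)
  \/ reff b (reff a y) = reff w y.
Proof.
  intros Ha Hb Hw He Hx Hy Ia Ib Iw F N1 N2 N3 N4 Nab.
  apply NNPP. intros H.
  apply not_or_and in H; destruct H as [H1 H].
  apply not_or_and in H; destruct H as [H2' H].
  apply not_or_and in H; destruct H as [H3' H].
  apply not_or_and in H; destruct H as [H4' H5].
  set (h := reff w y) in *.
  assert (Hh : onS1 h) by (apply onS1_reff; auto).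
  assert (Huy : onS1 (reff a y)) by (apply onS1_reff; auto).
  assert (Hvuy : onS1 (reff b (reff a y))) by (apply onS1_reff; auto).
  assert (Hvh : onS1 (reff b h)) by (apply onS1_reff; auto).
  pose proof (D2 c y (reff w) Iw Hy F) as K. fold h in K.
  assert (C1 : c (reff a y) = c y) by (apply (almost_ref c e a); auto).
  assert (C2 : c (reff b (reff a y)) = c (reff a y)).
  { apply (almost_ref c x b); auto.
    - intros Heq. apply N3. rewrite <- Heq. rewrite reff_invol; auto.
    - intros Heq. apply N4. rewrite <- Heq. rewrite reff_invol; auto. }
  assert (C3 : c (reff w (reff b (reff a y))) = c (reff b (reff a y))).
  { apply (almost_ref c y w); auto.
    intros Heq. apply Nab. exact (two_ref_fix a b y Ha Hb Hy Heq). }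
  assert (C4 : c (reff b h) = c h).
  { apply (almost_ref c x b); auto. }
  assert (G1 : reff b h <> e) by (intros Heq; apply H3'; rewrite <- Heq; rewrite reff_invol; auto).
  assert (G2 : reff b h <> reff a e) by (intros Heq; apply H4'; rewrite <- Heq; rewrite reff_invol; auto).
  assert (C5 : c (reff a (reff b h)) = c (reff b h)) by (apply (almost_ref c e a); auto).
  assert (T : reff a (reff b h) = reff w (reff b (reff a y))).
  { unfold h. pose proof (unit_nz _ Ha) as Za. pose proof (unit_nz _ Hb) as Zb.
    pose proof (unit_nz _ Hw) as Zw. pose proof (unit_nz _ Hy) as Zy.
    rewrite (reff_div a (reff b (reff w y))) by (apply onS1_reff; auto; apply onS1_reff; auto).
    rewrite (reff_div b (reff w y)) by (apply onS1_reff; auto).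
    rewrite (reff_div w y) by auto.
    rewrite (reff_div w (reff b (reff a y))) by auto.
    rewrite (reff_div b (reff a y)) by auto.
    rewrite (reff_div a y) by auto. field. auto. }
  apply K. rewrite <- C4, <- C5, T, C3, C2, C1. auto.
Qed.

Lemma gen_sub (L L' M : list C) (y : C) : gen L M y -> incl L' L -> gen L' M y.
Proof. intros [H1 [H2 H3]] I. split; auto. Qed.

Ltac inl := repeat (first [apply in_eq | apply in_cons]).
Ltac excl Hl := apply Hl; apply in_or_app; right; inl.

Lemma Pb_S1 c y a : Pb c y a -> onS1 a.
Proof. intros [H _]; auto. Qed.

Lemma stage1 (c : coloring) (L0 M0 : list C) :
  (forall y, gen L0 M0 y -> exists a, Pb c y a) ->
  exists SA L1 : list C, (forall z, In z SA -> onS1 z) /\ (forall y, gen L1 M0 y -> gen L0 M0 y) /\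
    (forall y w, gen L1 M0 y -> Pb c y w -> In (reff w y) SA).
Proof.
  intros HB.
  destruct (gen_exists L0 M0) as [e Ge]. destruct (HB e Ge) as [a [Ha [Ia Fa]]].
  assert (He : onS1 e) by (destruct Ge; auto).
  set (f := reff a e).
  assert (Hf : onS1 f) by (apply onS1_reff; auto).
  assert (Hx : exists x b, gen L0 M0 x /\ x <> e /\ x <> f /\ Pb c x b /\ b <> (- a)%C).
  { destruct (gen_exists (L0 ++ e :: f :: nil) M0) as [x1 G1].
    assert (G1' : gen L0 M0 x1) by (eapply gen_sub; eauto; apply incl_appl, incl_refl).
    destruct (HB x1 G1') as [b1 P1].
    destruct G1 as [Hx1 [Hl1 Hm1]].
    destruct (pdec b1 (- a)%C) as [Eb|Eb].
    - destruct (gen_exists (L0 ++ e :: f :: x1 :: reff b1 x1 :: nil) M0) as [x2 G2].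
      assert (G2' : gen L0 M0 x2) by (eapply gen_sub; eauto; apply incl_appl, incl_refl).
      destruct (HB x2 G2') as [b2 P2].
      destruct G2 as [Hx2 [Hl2 Hm2]].
      exists x2, b2. split; auto. split; [excl Hl2|]. split; [excl Hl2|]. split; auto.
      intros Eb2. destruct P1 as [Hb1 [I1 F1]]. destruct P2 as [Hb2 [I2 F2]].
      rewrite Eb2, <- Eb in I2.
      apply (same_inv c b1 x1 x2); auto. excl Hl2. excl Hl2.
    - exists x1, b1. split; auto. split; [excl Hl1|]. split; [excl Hl1|]. split; auto. }
  destruct Hx as [x [b [Gx [Nxe [Nxf [[Hb [Ib Fb]] Nba]]]]]].
  assert (Hx : onS1 x) by (destruct Gx; auto).
  assert (Nab : a <> b).
  { intros Eab. subst b. apply (same_inv c a e x); auto. }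
  set (g := reff b x).
  assert (Hg : onS1 g) by (apply onS1_reff; auto).
  exists (x :: g :: reff b e :: reff b f :: nil).
  exists (L0 ++ e :: f :: reff a x :: reff a g :: x :: g :: reff b e :: reff b f ::
          reff a (reff b e) :: reff a (reff b f) :: reff a (reff b (reff a x)) ::
          reff a (reff b (reff a g)) :: nil).
  split; [|split].
  - intros z Hz. destruct Hz as [<-|[<-|[<-|[<-|[]]]]]; auto; apply onS1_reff; auto.
  - intros y Gy. eapply gen_sub; eauto. apply incl_appl, incl_refl.
  - intros y w Gy [Hw [Iw Fw]]. destruct Gy as [Hy [Hl Hm]].
    assert (R1a := Rone c a b w e x y Ha Hb Hw He Hx Hy Ia Ib Iw Fw).
    assert (R1b := Rone c b a w x e y Hb Ha Hw Hx He Hy Ib Ia Iw Fw).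
    fold f in R1a. fold g in R1b.
    assert (N1 : y <> e) by excl Hl. assert (N2 : y <> f) by excl Hl.
    assert (N3 : y <> reff a x) by excl Hl. assert (N4 : y <> reff a g) by excl Hl.
    assert (N5 : y <> x) by excl Hl. assert (N6 : y <> g) by excl Hl.
    assert (N7 : y <> reff b e) by excl Hl. assert (N8 : y <> reff b f) by excl Hl.
    destruct (R1a N1 N2 N3 N4 Nab) as [Q|[Q|[Q|[Q|Q]]]];
      [rewrite Q; inl|rewrite Q; inl|rewrite Q; inl|rewrite Q; inl|].
    exfalso.
    destruct (R1b N5 N6 N7 N8 (not_eq_sym Nab)) as [Q2|[Q2|[Q2|[Q2|Q2]]]].
    + rewrite <- Q in Q2. apply unwind2 in Q2; auto. eapply Hl; [|exact Q2]. apply in_or_app; right. inl.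
    + rewrite <- Q in Q2. apply unwind2 in Q2; auto. eapply Hl; [|exact Q2]. apply in_or_app; right. inl.
    + rewrite <- Q in Q2. apply (f_equal (reff a)) in Q2. rewrite (reff_invol a x) in Q2 by auto.
      apply unwind3 in Q2; auto. eapply Hl; [|exact Q2]. apply in_or_app; right. inl.
    + rewrite <- Q in Q2. apply (f_equal (reff a)) in Q2. rewrite (reff_invol a g) in Q2 by auto.
      apply unwind3 in Q2; auto. eapply Hl; [|exact Q2]. apply in_or_app; right. inl.
    + rewrite <- Q in Q2. rewrite !reff_reff in Q2; auto. unfold rotf in Q2.
      pose proof (unit_nz _ Ha) as Za. pose proof (unit_nz _ Hb) as Zb. pose proof (unit_nz _ Hy) as Zy.
      assert (S : ((a / b) * (a / b))%C = RtoC 1).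
      { replace ((a/b)*(a/b))%C with (((a / b * y) / y) / ((b / a * y) / y))%C by (field; auto).
        rewrite Q2. field. auto. }
      apply Csq1 in S. destruct S as [S|S].
      * apply Nab. replace a with (a / b * b)%C by (field; auto). rewrite S. ring.
      * apply Nba. replace b with (b / a * a)%C by (field; auto).
        replace (b / a)%C with (/ (a / b))%C by (field; auto). rewrite S. field.
Qed.

Lemma in_prod_map (f : C -> C -> C) (S : list C) (al be : C) : In al S -> In be S ->
  In (f al be) (map (fun p => f (fst p) (snd p)) (list_prod S S)).
Proof. intros H1 H2. apply (in_map (fun p => f (fst p) (snd p)) _ (al, be)). apply in_prod; auto. Qed.

Ltac findin := first [ apply in_eq | assumption | solve [apply in_prod_map; assumption]
  | solve [apply in_map; assumption]
  | solve [apply in_or_app; left; findin] | solve [apply in_or_app; right; findin]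
  | solve [apply in_cons; findin] ].

Lemma reff_y (a y s : C) : onS1 y -> reff a y = s -> a = (s * y)%C.
Proof. intros Hy E. rewrite reff_div in E by auto. rewrite <- E. field. apply unit_nz; auto. Qed.

Lemma stage2 (c : coloring) (L1 M0 SA : list C) :
  (forall z, In z SA -> onS1 z) ->
  (forall y, gen L1 M0 y -> exists a, Pb c y a) ->
  (forall y w, gen L1 M0 y -> Pb c y w -> In (reff w y) SA) ->
  exists s1 L2, onS1 s1 /\ forall y w, gen L2 M0 y -> Pb c y w -> reff w y = s1.
Proof.
  intros HSA HB HS.
  set (D1 := map (fun p => (fst p * fst p / snd p)%C) (list_prod SA SA)).
  destruct (gen_exists (L1 ++ SA ++ D1) M0) as [y1 G1].
  assert (G1' : gen L1 M0 y1) by (eapply gen_sub; eauto; apply incl_appl, incl_refl).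
  destruct (HB y1 G1') as [a1 P1]. pose proof (HS y1 a1 G1' P1) as S1.
  destruct P1 as [Ha1 [I1 F1]]. destruct G1 as [Hy1 [Hl1 _]].
  set (s1 := reff a1 y1) in *.
  assert (Hs1 : onS1 s1) by (apply HSA; auto).
  set (D2 := map (fun p => (fst p * y1 / snd p)%C) (list_prod SA SA)).
  set (D3 := map (fun p => (fst p * fst p * y1 / (snd p * snd p))%C) (list_prod SA SA)).
  set (D4 := map (fun p => (fst p * fst p * y1 / snd p)%C) (list_prod SA SA)).
  destruct (gen_exists (L1 ++ SA ++ D1 ++ y1 :: s1 :: D2 ++ D3) (M0 ++ D4)) as [y2 G2].
  assert (G2' : gen L1 M0 y2).
  { destruct G2 as [? [? Hm]]. split; auto. split.
    - intros z Hz. apply H0. findin.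
    - intros z Hz. apply Hm. apply in_or_app; auto. }
  destruct (HB y2 G2') as [a2 P2]. pose proof (HS y2 a2 G2' P2) as S2.
  destruct P2 as [Ha2 [I2 F2]]. destruct G2 as [Hy2 [Hl2 Hm2]].
  set (s2 := reff a2 y2) in *.
  assert (Hs2 : onS1 s2) by (apply HSA; auto).
  assert (Ea1 : a1 = (s1 * y1)%C) by (apply reff_y; auto).
  assert (Ea2 : a2 = (s2 * y2)%C) by (apply reff_y; auto).
  assert (N12 : a1 <> a2).
  { intros Eq12. rewrite <- Eq12 in I2. apply (same_inv c a1 y1 y2); auto.
    - intros Heq. apply (Hl2 y1); [findin|auto].
    - intros Heq. apply (Hl2 s1); [findin|auto]. }
  exists s1.
  exists (L1 ++ y1 :: s1 :: y2 :: s2 :: reff a1 y2 :: reff a1 s2 :: reff a2 y1 :: reff a2 s1 ::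
          map (fun z => reff a1 (reff a2 z)) SA ++ map (fun z => reff a2 (reff a1 z)) SA).
  split; auto.
  intros y w Gy Pw.
  assert (Gy' : gen L1 M0 y).
  { destruct Gy as [? [? Hm]]. split; auto. split; auto. intros z Hz. apply H0. findin. }
  pose proof (HS y w Gy' Pw) as Sh.
  destruct Pw as [Hw [Iw Fw]]. destruct Gy as [Hy [Hl _]].
  assert (Ra := Rone c a1 a2 w y1 y2 y Ha1 Ha2 Hw Hy1 Hy2 Hy I1 I2 Iw Fw).
  assert (Rb := Rone c a2 a1 w y2 y1 y Ha2 Ha1 Hw Hy2 Hy1 Hy I2 I1 Iw Fw).
  fold s1 in Ra, Rb. fold s2 in Ra, Rb.
  set (h := reff w y) in *.
  assert (Ra' : h = y2 \/ h = s2 \/ h = reff a2 y1 \/ h = reff a2 s1).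
  { destruct Ra as [Q|[Q|[Q|[Q|Q]]]]; auto.
    - apply (Hl y1); findin.
    - apply (Hl s1); findin.
    - apply (Hl (reff a1 y2)); findin.
    - apply (Hl (reff a1 s2)); findin.
    - exfalso. apply unwind2 in Q; auto. apply (Hl (reff a1 (reff a2 h))); [|auto].
      apply in_or_app; right. do 8 apply in_cons. apply in_or_app; left.
      apply (in_map (fun z => reff a1 (reff a2 z))). auto. }
  assert (Rb' : h = y1 \/ h = s1 \/ h = reff a1 y2 \/ h = reff a1 s2).
  { destruct Rb as [Q|[Q|[Q|[Q|Q]]]]; auto.
    - apply (Hl y2); findin.
    - apply (Hl s2); findin.
    - apply (Hl (reff a2 y1)); findin.
    - apply (Hl (reff a2 s1)); findin.
    - exfalso. apply unwind2 in Q; auto. apply (Hl (reff a2 (reff a1 h))); [|auto].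
      apply in_or_app; right. do 8 apply in_cons. apply in_or_app; right.
      apply (in_map (fun z => reff a2 (reff a1 z))). auto. }
  pose proof (unit_nz _ Hy1) as Z1. pose proof (unit_nz _ Hy2) as Z2.
  pose proof (unit_nz _ Hs1) as Zs1. pose proof (unit_nz _ Hs2) as Zs2.
  assert (U1 : forall z, onS1 z -> reff a1 z = (s1 * y1 / z)%C) by (intros; rewrite reff_div; auto; rewrite Ea1; auto).
  assert (U2 : forall z, onS1 z -> reff a2 z = (s2 * y2 / z)%C) by (intros; rewrite reff_div; auto; rewrite Ea2; auto).
  rewrite U2 in Ra' by auto. rewrite U2 in Ra' by auto.
  rewrite U1 in Rb' by auto. rewrite U1 in Rb' by auto.
  destruct Ra' as [Q|[Q|[Q|Q]]].
  - exfalso. apply (Hl2 y2); [|auto]. rewrite <- Q. findin.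
  - destruct Rb' as [Q'|[Q'|[Q'|Q']]].
    + exfalso. apply (Hl1 y1); [|auto]. rewrite <- Q'. findin.
    + congruence.
    + exfalso. apply (Hl2 (s1 * y1 / s2)%C).
      * apply in_or_app; right. apply in_or_app; right. apply in_or_app; right.
        do 2 apply in_cons. apply in_or_app; left.
        exact (in_prod_map (fun al be => (al * y1 / be)%C) SA s1 s2 S1 S2).
      * rewrite Q in Q'. rewrite Q'. field. split; auto.
    + exfalso. apply (Hl1 (s2 * s2 / s1)%C).
      * apply in_or_app; right. apply in_or_app; right.
        exact (in_prod_map (fun al be => (al * al / be)%C) SA s2 s1 S2 S1).
      * rewrite Q in Q'. replace y1 with ((s1 * y1 / s2) * s2 / s1)%C by (field; auto).
        rewrite <- Q'. field. auto.
  - exfalso. apply (Hl2 (h * y1 / s2)%C).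
    + apply in_or_app; right. apply in_or_app; right. apply in_or_app; right.
      do 2 apply in_cons. apply in_or_app; left.
      exact (in_prod_map (fun al be => (al * y1 / be)%C) SA h s2 Sh S2).
    + rewrite Q. field. auto.
  - destruct Rb' as [Q'|[Q'|[Q'|Q']]].
    + exfalso. apply (Hl1 y1); [|auto]. rewrite <- Q'. findin.
    + exfalso. apply (Hl2 (s1 * s1 / s2)%C).
      * apply in_or_app; right. apply in_or_app; right. apply in_or_app; left.
        exact (in_prod_map (fun al be => (al * al / be)%C) SA s1 s2 S1 S2).
      * replace y2 with ((s2 * y2 / s1) * s1 / s2)%C by (field; auto). rewrite <- Q, Q'. field. auto.
    + exfalso. apply (Hm2 (s1 * s1 * y1 / s2)%C).
      * apply in_or_app; right.
        exact (in_prod_map (fun al be => (al * al * y1 / be)%C) SA s1 s2 S1 S2).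
      * rewrite Q in Q'. replace (y2 * y2)%C with ((s2 * y2 / s1) * y2 * s1 / s2)%C by (field; auto).
        rewrite Q'. field. auto.
    + exfalso. apply (Hl2 (s1 * s1 * y1 / (s2 * s2))%C).
      * apply in_or_app; right. apply in_or_app; right. apply in_or_app; right.
        do 2 apply in_cons. apply in_or_app; right.
        exact (in_prod_map (fun al be => (al * al * y1 / (be * be))%C) SA s1 s2 S1 S2).
      * replace y2 with ((s2 * y2 / s1) * s1 / s2)%C by (field; auto). rewrite <- Q, Q'. field. auto.
Qed.

Lemma flip_move (c : coloring) (y s1 w : C) : onS1 y -> onS1 w ->
  inv (flip c y) (reff w) -> reff w y = s1 -> s1 <> y -> inv (flip c s1) (reff w).
Proof.
  intros Hy Hw I E N p Hp.
  assert (Hs1 : onS1 s1) by (rewrite <- E; apply onS1_reff; auto).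
  assert (K : c s1 <> c y) by (rewrite <- E; apply D2; auto; rewrite E; auto).
  destruct (pdec p y) as [Py|Py].
  - subst p. rewrite E. unfold flip. destruct (pdec s1 s1) as [_|X]; [|congruence].
    destruct (pdec y s1) as [X|_]; [congruence|]. symmetry. apply color_neq; auto.
  - destruct (pdec p s1) as [Ps|Ps].
    + subst p. assert (Hu : reff w s1 = y) by (rewrite <- E; apply reff_invol; auto).
      rewrite Hu. unfold flip. destruct (pdec s1 s1) as [_|X]; [|congruence].
      destruct (pdec y s1) as [X|_]; [congruence|]. apply color_neq; auto.
    + assert (A1 : reff w p <> s1).
      { intros Heq. apply Py. rewrite <- (reff_invol w p) by auto. rewrite Heq.
        rewrite <- E. apply reff_invol; auto. }
      unfold flip. destruct (pdec (reff w p) s1) as [X|_]; [contradiction|].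
      destruct (pdec p s1) as [X|_]; [contradiction|].
      apply (almost_ref c y w); auto. rewrite E; auto.
Qed.

Lemma CT (c : coloring) : (forall e, onS1 e -> Bad c e) ->
  exists s, onS1 s /\ forall p q : C, onS1 p -> onS1 q -> p <> s -> q <> s -> c p = c q.
Proof.
  intros Hbad.
  destruct (classic (exists r, onS1 r /\ r <> RtoC 1 /\ inv c (rotf r))) as [[r [Hr [Nr Ir]]]|NoR].
  - exists (RtoC 1). split; [apply onS1_1|]. intros p q Hp Hq _ _. exact (caseA c r Hr Nr Ir Hbad p q Hp Hq).
  - destruct (Bgen c Hbad NoR) as [L0 [M0 HB]].
    destruct (stage1 c L0 M0 HB) as [SA [L1 [HSA [HL1 HS]]]].
    assert (HB1 : forall y, gen L1 M0 y -> exists a, Pb c y a) by (intros; apply HB; apply HL1; auto).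
    destruct (stage2 c L1 M0 SA HSA HB1 HS) as [s1 [L2 [Hs1 Hfin]]].
    exists s1. split; auto.
    set (L := L2 ++ L1).
    assert (Key : forall y, gen L M0 y -> inv (flip c s1) (reff (s1 * y)%C)).
    { intros y Gy.
      assert (G2 : gen L2 M0 y) by (apply (gen_sub L L2 M0 y Gy); unfold L; apply incl_appl, incl_refl).
      assert (G1 : gen L1 M0 y) by (apply (gen_sub L L1 M0 y Gy); unfold L; apply incl_appr, incl_refl).
      destruct (HB1 y G1) as [w Pw]. pose proof (Hfin y w G2 Pw) as Ew.
      destruct Pw as [Hw [Iw Fw]]. destruct Gy as [Hy _].
      assert (Ew' : w = (s1 * y)%C) by (apply reff_y; auto).
      rewrite <- Ew'. apply (flip_move c y s1 w); auto. rewrite <- Ew. auto. }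
    assert (Const : forall p q : C, onS1 p -> onS1 q -> flip c s1 p = flip c s1 q).
    { intros p q Hp Hq.
      pose proof (unit_nz _ Hp) as Zp. pose proof (unit_nz _ Hq) as Zq. pose proof (unit_nz _ Hs1) as Zs.
      destruct (gen_exists (map (fun z => (z * s1 / p)%C) L ++ map (fun z => (z * s1 / q)%C) L)
                           (map (fun z => (z * s1 * s1 / (p * p))%C) M0 ++ map (fun z => (z * s1 * s1 / (q * q))%C) M0))
        as [m [Hm [Hml Hmm]]].
      pose proof (unit_nz _ Hm) as Zm.
      assert (Ga : gen L M0 (m * p / s1)%C).
      { split; [apply onS1_div; auto; apply onS1_mult; auto|]. split.
        - intros z Hz Heq. apply (Hml (z * s1 / p)%C).
          + apply in_or_app; left. apply (in_map (fun z => (z * s1 / p)%C)). auto.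
          + rewrite <- Heq. field. auto.
        - intros z Hz Heq. apply (Hmm (z * s1 * s1 / (p * p))%C).
          + apply in_or_app; left. apply (in_map (fun z => (z * s1 * s1 / (p * p))%C)). auto.
          + rewrite <- Heq. field. auto. }
      assert (Gb : gen L M0 (q * m / s1)%C).
      { split; [apply onS1_div; auto; apply onS1_mult; auto|]. split.
        - intros z Hz Heq. apply (Hml (z * s1 / q)%C).
          + apply in_or_app; right. apply (in_map (fun z => (z * s1 / q)%C)). auto.
          + rewrite <- Heq. field. auto.
        - intros z Hz Heq. apply (Hmm (z * s1 * s1 / (q * q))%C).
          + apply in_or_app; right. apply (in_map (fun z => (z * s1 * s1 / (q * q))%C)). auto.
          + rewrite <- Heq. field. auto. }
      pose proof (Key _ Ga p Hp) as K1. pose proof (Key _ Gb m Hm) as K2.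
      rewrite reff_div in K1 by auto. rewrite reff_div in K2 by auto.
      replace (s1 * (m * p / s1) / p)%C with m in K1 by (field; auto).
      replace (s1 * (q * m / s1) / m)%C with q in K2 by (field; auto).
      congruence. }
    intros p q Hp Hq Np Nq. pose proof (Const p q Hp Hq) as K. unfold flip in K.
    destruct (pdec p s1); [contradiction|]. destruct (pdec q s1); [contradiction|]. auto.
Qed.

Lemma classify (g : O2) : ~ o2_is_id g ->
  (exists s : C, onS1 s /\ s <> RtoC 1 /\ forall p, o2_act g p = rotf s p) \/
  (exists a : C, onS1 a /\ forall p, o2_act g p = reff a p).
Proof.
  intros N. assert (U : onS1 (o2_a g, o2_b g)) by (unfold onS1; simpl; apply o2_unit).
  destruct (o2_refl g) eqn:Er.
  - right. exists (o2_a g, o2_b g). split; auto. intros p. rewrite o2_act_eq, Er. auto.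
  - left. exists (o2_a g, o2_b g). split; auto. split.
    + intros Heq. apply N. intros p Hp. rewrite o2_act_eq, Er, Heq. unfold rotf.
      destruct p as [x y]. unfold Cmult; simpl. f_equal; ring.
    + intros p. rewrite o2_act_eq, Er. auto.
Qed.

Lemma notdist_bad (c : coloring) : ~ distinguishing c ->
  (exists s, onS1 s /\ s <> RtoC 1 /\ inv c (rotf s)) \/ (exists a, onS1 a /\ inv c (reff a)).
Proof.
  intros N. unfold distinguishing in N. apply not_all_ex_not in N. destruct N as [g N].
  apply imply_to_and in N. destruct N as [Ng N]. apply NNPP in N.
  destruct (classify g Ng) as [[s [Hs [Ns E]]]|[a [Ha E]]].
  - left. exists s. split; auto. split; auto. intros p Hp. rewrite <- E. auto.
  - right. exists a. split; auto. intros p Hp. rewrite <- E. auto.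
Qed.

Definition alp : C := (3/5, 4/5).
Definition bet : C := (0, 1).

Lemma cancel_l (s x y : C) : s <> RtoC 0 -> (s * x)%C = (s * y)%C -> x = y.
Proof. intros Z H. replace x with (/ s * (s * x))%C by (field; auto). rewrite H. field; auto. Qed.

Ltac toC := match goal with |- ?a = ?b => change (@eq C a b) end.
Ltac cneq := let H := fresh in intros H; unfold Cmult, alp, bet in H; simpl in H;
  injection H; intros; lra.

Definition cstar_of (s : C) (k : color) : coloring :=
  fun p => if pdec p s then swapc k else if pdec p (s * alp)%C then swapc k
           else if pdec p (s * bet)%C then swapc k else k.

Lemma cstar_dist (s : C) (k : color) : onS1 s -> distinguishing (cstar_of s k).
Proof.
  intros Hs g Ng Ig. set (cs := cstar_of s k) in Ig.
  pose proof (unit_nz _ Hs) as Zs.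
  assert (Ha : onS1 alp) by (unfold onS1, alp; simpl; lra).
  assert (Hb : onS1 bet) by (unfold onS1, bet; simpl; lra).
  assert (Mem : forall t, (t = s \/ t = (s * alp)%C \/ t = (s * bet)%C) ->
     forall q, onS1 t -> o2_act g t = q -> q = s \/ q = (s * alp)%C \/ q = (s * bet)%C).
  { intros t Ht q Hts Eqt. pose proof (Ig t Hts) as K. rewrite Eqt in K.
    assert (Kt : cs t = swapc k).
    { unfold cs, cstar_of. destruct Ht as [Et|[Et|Et]]; rewrite Et.
      - destruct (pdec s s); [auto|congruence].
      - destruct (pdec (s * alp)%C s); [auto|]. destruct (pdec (s*alp)%C (s*alp)%C); [auto|congruence].
      - destruct (pdec (s * bet)%C s); [auto|]. destruct (pdec (s*bet)%C (s*alp)%C); [auto|].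
        destruct (pdec (s*bet)%C (s*bet)%C); [auto|congruence]. }
    rewrite Kt in K. unfold cs, cstar_of in K.
    destruct (pdec q s); auto. destruct (pdec q (s*alp)%C); auto. destruct (pdec q (s*bet)%C); auto.
    exfalso. symmetry in K. apply (swapc_neq k). auto. }
  assert (Hsa : onS1 (s * alp)%C) by (apply onS1_mult; auto).
  assert (Hsb : onS1 (s * bet)%C) by (apply onS1_mult; auto).
  pose proof (Mem s (or_introl eq_refl) _ Hs eq_refl) as M1.
  pose proof (Mem (s*alp)%C (or_intror (or_introl eq_refl)) _ Hsa eq_refl) as M2.
  pose proof (Mem (s*bet)%C (or_intror (or_intror eq_refl)) _ Hsb eq_refl) as M3.
  destruct (classify g Ng) as [[r [Hr [Nr E]]]|[a [Ha' E]]]; rewrite !E in M1, M2, M3; unfold rotf in *.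
  - replace (r * s)%C with (s * r)%C in M1 by ring.
    replace (r * (s * alp))%C with (s * (r * alp))%C in M2 by ring.
    assert (M1' : r = RtoC 1 \/ r = alp \/ r = bet).
    { destruct M1 as [X|[X|X]]; [left|right; left|right; right]; apply (cancel_l s); auto.
      rewrite X. ring. }
    assert (M2' : (r * alp)%C = RtoC 1 \/ (r * alp)%C = alp \/ (r * alp)%C = bet).
    { destruct M2 as [X|[X|X]]; [left|right; left|right; right]; apply (cancel_l s); auto.
      rewrite X. ring. }
    destruct M1' as [X|[X|X]]; [contradiction| |]; subst r;
      destruct M2' as [Y|[Y|Y]]; revert Y; cneq.
  - rewrite reff_div in M1, M2, M3 by auto.
    set (ga := (a / (s * s))%C).
    assert (Ea : @eq C a (s * s * ga)%C) by (unfold ga; field; auto).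
    rewrite Ea in M1, M2, M3.
    assert (M1' : ga = RtoC 1 \/ ga = alp \/ ga = bet).
    { destruct M1 as [X|[X|X]]; [left|right; left|right; right]; apply (cancel_l s); auto;
      replace (s * ga)%C with (s * s * ga / s)%C by (toC; field; auto); rewrite X; ring. }
    assert (M2' : ga = alp \/ ga = (alp * alp)%C \/ ga = (alp * bet)%C).
    { destruct M2 as [X|[X|X]]; [left|right; left|right; right]; apply (cancel_l s); auto;
      replace (s * ga)%C with ((s * s * ga / (s * alp)) * alp)%C by (toC; field; split; auto; apply unit_nz; auto);
      rewrite X; ring. }
    assert (M3' : ga = bet \/ ga = (alp * bet)%C \/ ga = (bet * bet)%C).
    { destruct M3 as [X|[X|X]]; [left|right; left|right; right]; apply (cancel_l s); auto;
      replace (s * ga)%C with ((s * s * ga / (s * bet)) * bet)%C by (toC; field; split; auto; apply unit_nz; auto);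
      rewrite X; ring. }
    destruct M1' as [X|[X|X]]; rewrite X in M2', M3';
      destruct M2' as [Y|[Y|Y]]; try (revert Y; cneq);
      destruct M3' as [Z|[Z|Z]]; revert Z; try rewrite <- Y; cneq.
Qed.

Theorem corollary2p5p1 :
  forall c : coloring,
    exists (cstar : coloring) (L : list (R * R)),
      distinguishing cstar /\
      (length L <= 3)%nat /\
      (forall x, onS1 x -> c x <> cstar x -> In x L).
Proof.
  intros c.
  destruct (classic (exists e, onS1 e /\ distinguishing (flip c e))) as [[e [He De]]|N].
  - exists (flip c e), (e :: nil). split; auto. split; [simpl; lia|].
    intros x Hx Hne. unfold flip in Hne. destruct (pdec x e) as [Ex|Nx]; [left; auto|contradiction].
  - assert (Hbad : forall e, onS1 e -> Bad c e).
    { intros e He. apply notdist_bad. intros D. apply N. exists e. auto. }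
    destruct (CT c Hbad) as [s [Hs Hc]].
    assert (Nss : (- s)%C <> s).
    { destruct s as [a b]. intros Heq. unfold Copp in Heq. simpl in Heq. injection Heq. intros.
      unfold onS1 in Hs. simpl in Hs. nra. }
    exists (cstar_of s (c (- s)%C)), (s :: (s * alp)%C :: (s * bet)%C :: nil).
    split; [apply cstar_dist; auto|]. split; [simpl; lia|].
    intros x Hx Hne. unfold cstar_of in Hne.
    destruct (pdec x s) as [E1|E1]; [left; auto|].
    destruct (pdec x (s * alp)%C) as [E2|E2]; [right; left; auto|].
    destruct (pdec x (s * bet)%C) as [E3|E3]; [right; right; left; auto|].
    exfalso. apply Hne. apply Hc; auto. apply onS1_opp; auto.
Qed.
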